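(* Let $A\in\mathbb{R}^{n\times n}$, $B\in\mathbb{R}^{n\times m}$, $C\in\mathbb{R}^{p\times n}$, $\bar T>0$. Let $\hat A, \hat B, \hat C$ be reduced matrices computed by the time-limited IRKA-type algorithm, in the following sense: $\hat A=S^{-1}DS$ with $D=\operatorname{diag}(\lambda_1,\dots,\lambda_r)$, $\tilde B=S\hat B$, $\tilde C=\hat CS^{-1}$, and there are $V,W\in\mathbb{C}^{n\times r}$ with $W^TV$ invertible such that $$-VD-AV=B\tilde B^T-e^{A\bar T}B\tilde B^Te^{D\bar T},\qquad -WD-A^TW=C^T\tilde C-e^{A^T\bar T}C^T\tilde Ce^{D\bar T},$$ $$\hat A=(W^TV)^{-1}W^TAV,\qquad \hat B=(W^TV)^{-1}W^TB,\qquad \hat C=CV.$$ Assume all matrix inverses below exist. Set $\operatorname{Pr}:=V(W^TV)^{-1}W^T$. Then: (a) $L_c-R_c=E_c$, where $L_c:=(I\otimes \hat C) \left[(I\otimes \hat A)+(D\otimes I)\right]^{-1}(e^{D \bar T}\tilde B \otimes e^{\hat A \bar T}\hat B -\tilde B \otimes \hat B) \operatorname{vec}(I)$, $R_c:=(I\otimes C) \left[(I\otimes A)+(D\otimes I)\right]^{-1} (e^{D \bar T}\tilde B \otimes e^{ A \bar T} B -\tilde B \otimes B) \operatorname{vec}(I)$ and $$E_c = (I\otimes \hat C) \left[(I\otimes \hat A)+(D\otimes I)\right]^{-1}\big(e^{D \bar T}\tilde B \otimes (W^TV)^{-1}W^T(e^{A \operatorname{Pr}\bar T}-e^{A \bar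 T}) B \big) \operatorname{vec}(I).$$ (b) $L_b-R_b=E_b$, where $L_b:=(\hat B^T\otimes I) \left[(I\otimes D)+(\hat A^T\otimes I)\right]^{-1}(e^{\hat A^T \bar T}\hat C^T \otimes e^{D \bar T}\tilde C^T-\hat C^T \otimes \tilde C^T)\operatorname{vec}(I)$, $R_b:=(B^T\otimes I) \left[(I\otimes D)+(A^T\otimes I)\right]^{-1}(e^{A^T \bar T} C^T \otimes e^{D \bar T}\tilde C^T-C^T \otimes \tilde C^T)\operatorname{vec}(I)$ and $$E_b = (\hat B^T\otimes I) \left[(I\otimes D)+(\hat A^T\otimes I)\right]^{-1}\big(V^T(e^{ A^T \operatorname{Pr}^T \bar T}-e^{ A^T \bar T})C^T \otimes e^{D \bar T}\tilde C^T\big)\operatorname{vec}(I).$$ (c) For all $i=1,\ldots,r$, $L_\lambda^i-R_\lambda^i=E_{\lambda,1}^i+E_{\lambda,2}^i$, where $$L_\lambda^i:=\operatorname{vec}^T(I) (\hat C \otimes \tilde C) \hat K_2^{-1} (I\otimes e_i e_i^T)\Big( \hat K_2^{-1} (e^{\hat A \bar T}\hat B \otimes e^{D \bar T}\tilde B -\hat B \otimes \tilde B)- (\bar Te^{\hat A \bar T}\hat B \otimes e^{D \bar T}\tilde B) \Big)\operatorname{vec}(I),$$ $$R_\lambda^i:=\operatorname{vec}^T(I) ( C \otimes \tilde C) K_2^{-1} (I\otimes e_i e_i^T)\Big( K_2^{-1} (e^{A \bar T} B \otimes e^{D \bar T}\tilde B -B \otimes \tilde B)-(\bar Te^{A \bar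 T}B \otimes e^{D \bar T}\tilde B)\Big) \operatorname{vec}(I),$$ $$E_{\lambda, 1}^i=\operatorname{vec}^T(I) (\hat C \otimes \tilde C) \hat K_2^{-1} (I\otimes e_i e_i^T)\Big( \hat K_2^{-1} \big((W^TV)^{-1} W^T(e^{A \operatorname{Pr} \bar T}-e^{A \bar T}) B \otimes e^{D \bar T}\tilde B\big)-\big(\bar T(W^TV)^{-1} W^T(e^{A \operatorname{Pr}\bar T}-e^{A \bar T}) B \otimes e^{D \bar T}\tilde B\big)\Big) \operatorname{vec}(I),$$ $$E_{\lambda, 2}^i=\operatorname{vec}^T(I) (C e^{A \bar T} \otimes \tilde C e^{D \bar T})\left[(V\otimes I) \hat K_2^{-1} ((W^T V)^{-1}W^T \otimes I)- K_2^{-1}\right](I\otimes e_i e_i^T)\left[K_2^{-1} (e^{A \bar T} B \otimes e^{D \bar T}\tilde B - B \otimes \tilde B)-(\bar Te^{A \bar T} B \otimes e^{D \bar T}\tilde B)\right]\operatorname{vec}(I),$$ with $\hat K_2:=(I\otimes D)+(\hat A\otimes I)$ and $K_2:=(I\otimes D)+(A\otimes I)$.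
   Context: $e_i$ is the $i$-th column of an identity matrix, $I$ denotes identity matrices of suitable sizes, $\otimes$ is the Kronecker product, $\operatorname{vec}$ stacks the columns of a matrix into a vector and $\operatorname{vec}^T(I)=(\operatorname{vec}(I))^T$; transposes are plain transposes. The time-limited IRKA-type algorithm iterates: given $\hat A,\hat B,\hat C$, diagonalize $D=S\hat AS^{-1}$, set $\tilde B=S\hat B$, $\tilde C=\hat CS^{-1}$, solve the two Sylvester equations displayed in the claim for $V$ and $W$, orthogonalize $V,W$, and set $\hat A=(W^TV)^{-1}W^TAV$, $\hat B=(W^TV)^{-1}W^TB$, $\hat C=CV$. The quantities $L_c,R_c$, $L_b,R_b$, $L_\lambda^i,R_\lambda^i$ are the two sides of the Kronecker-form first-order necessary optimality conditions for the time-limited $\mathcal H_2$ model reduction problem. *)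

(* Defs.v *)
From HB Require Import structures.
From mathcomp Require Import all_boot all_order all_algebra.
From mathcomp Require Import all_classical all_reals all_analysis.
From mathcomp Require Import complex.

Set Implicit Arguments.
Unset Strict Implicit.
Unset Printing Implicit Defensive.

Import Order.TTheory GRing.Theory Num.Theory.
Import numFieldNormedType.Exports.
Local Open Scope ring_scope.

(* Index splitting 'I_(m * n) <-> 'I_m * 'I_n (lexicographic:         *)
(* k = i * n + j), the same pairing as MathComp's mxvec_index.         *)
Definition ix_pair (m n : nat) (k : 'I_(m * n)) : 'I_m * 'I_n :=
  enum_val (cast_ord (esym (mxvec_cast m n)) k).

Definition kron (T : pzRingType) (m1 n1 m2 n2 : nat)
    (A : 'M[T]_(m1, n1)) (B : 'M[T]_(m2, n2)) : 'M[T]_(m1 * m2, n1 * n2) :=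
  \matrix_(k, l) (A (ix_pair k).1 (ix_pair l).1 * B (ix_pair k).2 (ix_pair l).2).

(* vec: stacks the COLUMNS of X : 'M_(m, n) into a column vector of
   length n * m; index (j, i) (column j outer, row i inner) holds X i j.
   With this convention vec (A X B) = (B^T ⊗ A) vec X. *)
Definition vec (T : Type) (m n : nat) (X : 'M[T]_(m, n)) : 'cV[T]_(n * m) :=
  \col_k X (ix_pair k).2 (ix_pair k).1.

Definition expm_partial (R : realType) (n : nat) (M : 'M[R[i]]_n) (N : nat)
  : 'M[R[i]]_n :=
  \sum_(k < N) ((k`!)%:R^-1 *: iter k (mulmx M) 1%:M).

Definition expm (R : realType) (n : nat) (M : 'M[R[i]]_n) : 'M[R[i]]_n :=
  \matrix_(i, j)
    Complex (limn (fun N => complex.Re (expm_partial M N i j)))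
            (limn (fun N => complex.Im (expm_partial M N i j))).

Definition cmx (R : realType) (m n : nat) (A : 'M[R]_(m, n)) : 'M[R[i]]_(m, n) :=
  map_mx (fun x : R => (x%:C)%C) A.

Definition vecI (R : realType) (k : nat) : 'cV[R[i]]_(k * k) := vec (1%:M : 'M[R[i]]_k).

Definition eeT (R : realType) (r : nat) (i : 'I_r) : 'M[R[i]]_r := delta_mx i i.

Definition idm (R : realType) (k : nat) : 'M[R[i]]_k := 1%:M.

(* Main.v *)
Require Import Defs.
From HB Require Import structures.
From mathcomp Require Import all_boot all_order all_algebra.
From mathcomp Require Import all_classical all_reals all_analysis.
From mathcomp Require Import complex.
From mathcomp Require Import ring lra.

Module Helpers.
Import Order.TTheory GRing.Theory Num.Theory.
Import numFieldNormedType.Exports.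
Set Implicit Arguments.
Unset Strict Implicit.
Unset Printing Implicit Defensive.
Local Open Scope classical_set_scope.
Local Open Scope ring_scope.
Section Cplx.
Variable R : realType.
Local Notation C := (R[i]).

Definition zconv (z : nat -> C) (l : C) :=
  (fun N => complex.Re (z N)) @ \oo --> complex.Re l /\
  (fun N => complex.Im (z N)) @ \oo --> complex.Im l.

Lemma zconv_uniq z l l' : zconv z l -> zconv z l' -> l = l'.
Proof.
move=> [h1 h2] [h3 h4].
have e1 : limn (fun N => complex.Re (z N)) = complex.Re l by apply: cvg_lim.
have e2 : limn (fun N => complex.Im (z N)) = complex.Im l by apply: cvg_lim.
have e3 : limn (fun N => complex.Re (z N)) = complex.Re l' by apply: cvg_lim.
have e4 : limn (fun N => complex.Im (z N)) = complex.Im l' by apply: cvg_lim.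
have r1 : complex.Re l = complex.Re l' := etrans (esym e1) e3.
have r2 : complex.Im l = complex.Im l' := etrans (esym e2) e4.
by case: l l' r1 r2 {e1 e2 e3 e4 h1 h2 h3 h4} => a b [a' b'] /= -> ->.
Qed.

Lemma zconv_ext z w l : (forall N, z N = w N) -> zconv z l -> zconv w l.
Proof. by move=> e; have -> : z = w by apply: funext. Qed.

Lemma ReD (x y : C) : complex.Re (x + y) = complex.Re x + complex.Re y.
Proof. by case: x => a b; case: y. Qed.
Lemma ImD (x y : C) : complex.Im (x + y) = complex.Im x + complex.Im y.
Proof. by case: x => a b; case: y. Qed.
Lemma ReM (x y : C) : complex.Re (x * y) = complex.Re x * complex.Re y - complex.Im x * complex.Im y.
Proof. by case: x => a b; case: y. Qed.
Lemma ImM (x y : C) : complex.Im (x * y) = complex.Re x * complex.Im y + complex.Im x * complex.Re y.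
Proof. by case: x => a b; case: y. Qed.

Lemma zconv_cst c : zconv (fun _ => c) c.
Proof. by split; apply: cvg_cst. Qed.

Lemma zconvD z w l k : zconv z l -> zconv w k -> zconv (fun N => z N + w N) (l + k).
Proof.
move=> [h1 h2] [h3 h4]; split.
  have -> : (fun N => complex.Re (z N + w N)) = (fun N => complex.Re (z N)) + (fun N => complex.Re (w N)).
    by apply: funext => N; rewrite /= ReD.
  by rewrite ReD; apply: cvgD.
have -> : (fun N => complex.Im (z N + w N)) = (fun N => complex.Im (z N)) + (fun N => complex.Im (w N)).
  by apply: funext => N; rewrite /= ImD.
by rewrite ImD; apply: cvgD.
Qed.

Lemma zconvMr z l c : zconv z l -> zconv (fun N => z N * c) (l * c).
Proof.
move=> [h1 h2]; split.
  have -> : (fun N => complex.Re (z N * c)) = (fun N => complex.Re (z N)) \* (fun _ => complex.Re c)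
     - (fun N => complex.Im (z N)) \* (fun _ => complex.Im c).
    by apply: funext => N; rewrite /= ReM.
  by rewrite ReM; apply: cvgB; apply: cvgM => //; apply: cvg_cst.
have -> : (fun N => complex.Im (z N * c)) = (fun N => complex.Re (z N)) \* (fun _ => complex.Im c)
   + (fun N => complex.Im (z N)) \* (fun _ => complex.Re c).
  by apply: funext => N; rewrite /= ImM.
by rewrite ImM; apply: cvgD; apply: cvgM => //; apply: cvg_cst.
Qed.

Lemma zconvMl z l c : zconv z l -> zconv (fun N => c * z N) (c * l).
Proof.
move=> h; have := zconvMr c h; rewrite [l * c]mulrC; apply: zconv_ext => N; exact: mulrC.
Qed.

Lemma zconv_sum (I : Type) (s : seq I) (z : I -> nat -> C) (l : I -> C) :
  (forall k, zconv (z k) (l k)) ->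
  zconv (fun N => \sum_(k <- s) z k N) (\sum_(k <- s) l k).
Proof.
move=> h; elim: s => [|a s IH].
  rewrite big_nil; have := zconv_cst 0; apply: zconv_ext => N; by rewrite big_nil.
rewrite big_cons; have := zconvD (h a) IH; apply: zconv_ext => N; by rewrite big_cons.
Qed.

Lemma Re_sum (I : Type) (s : seq I) (F : I -> C) :
  complex.Re (\sum_(k <- s) F k) = \sum_(k <- s) complex.Re (F k).
Proof.
elim: s => [|a s IH]; first by rewrite !big_nil.
by rewrite !big_cons ReD IH.
Qed.
Lemma Im_sum (I : Type) (s : seq I) (F : I -> C) :
  complex.Im (\sum_(k <- s) F k) = \sum_(k <- s) complex.Im (F k).
Proof.
elim: s => [|a s IH]; first by rewrite !big_nil.
by rewrite !big_cons ImD IH.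
Qed.

Definition mxbnd n (M : 'M[C]_n) : R :=
  \sum_i \sum_j (`|complex.Re (M i j)| + `|complex.Im (M i j)|).

Lemma mxbnd_ge0 n (M : 'M[C]_n) : 0 <= mxbnd M.
Proof. by apply: sumr_ge0 => i _; apply: sumr_ge0 => j _; apply: addr_ge0. Qed.

Lemma mxbnd_entry n (M : 'M[C]_n) i j :
  `|complex.Re (M i j)| <= mxbnd M /\ `|complex.Im (M i j)| <= mxbnd M.
Proof.
have H : `|complex.Re (M i j)| + `|complex.Im (M i j)| <= mxbnd M.
  apply: (@le_trans _ _ (\sum_j (`|complex.Re (M i j)| + `|complex.Im (M i j)|))).
    rewrite [X in _ <= X](bigD1 j) //= lerDl.
    by apply: sumr_ge0 => k _; apply: addr_ge0.
  rewrite /mxbnd [X in _ <= X](bigD1 i) //= lerDl.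
  by apply: sumr_ge0 => k _; apply: sumr_ge0 => l _; apply: addr_ge0.
by split; apply: le_trans H; rewrite ?lerDl ?lerDr.
Qed.

Lemma pow_bnd n (M : 'M[C]_n) k i j :
  let x := 2 * n%:R * mxbnd M in
  `|complex.Re (iter k (mulmx M) 1%:M i j)| <= x ^+ k /\
  `|complex.Im (iter k (mulmx M) 1%:M i j)| <= x ^+ k.
Proof.
move=> x; have x0 : 0 <= x by rewrite /x !mulr_ge0 // mxbnd_ge0.
elim: k i j => [|k IH] i j.
  rewrite /= mxE expr0; case: (i == j) => /=; rewrite ?normr1 ?normr0 //.
have key : forall (f : C -> R), (forall l, `|f (M i l * iter k (mulmx M) 1%:M l j)| <= 2 * mxbnd M * x ^+ k) ->
   `|\sum_l f (M i l * iter k (mulmx M) 1%:M l j)| <= x ^+ k.+1.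
  move=> f hf; apply: le_trans (ler_norm_sum _ _ _) _.
  apply: (@le_trans _ _ (\sum_(l < n) (2 * mxbnd M * x ^+ k))).
    by apply: ler_sum => l _; apply: hf.
  rewrite sumr_const card_ord exprS.
  suff -> : x * x ^+ k = 2 * mxbnd M * x ^+ k *+ n by [].
  rewrite -[_ *+ n]mulr_natr /x; ring.
have two : forall a b : R, a <= mxbnd M * x ^+ k -> b <= mxbnd M * x ^+ k -> a + b <= 2 * mxbnd M * x ^+ k.
  by move=> a b ha hb; rewrite -mulrA mulr2n mulrDl !mul1r; apply: lerD.
split.
  rewrite /= mxE Re_sum.
  have := key (fun z => complex.Re z); apply => l.
  have [a1 a2] := mxbnd_entry M i l; have [b1 b2] := IH l j.
  rewrite ReM; apply: le_trans (ler_normB _ _) _; rewrite !normrM.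
  by apply: two; apply: ler_pM.
rewrite /= mxE Im_sum.
have := key (fun z => complex.Im z); apply => l.
have [a1 a2] := mxbnd_entry M i l; have [b1 b2] := IH l j.
rewrite ImM; apply: le_trans (ler_normD _ _) _; rewrite !normrM.
by apply: two; apply: ler_pM.
Qed.

Lemma cvg_dom (u : R^nat) x : 0 <= x -> (forall k, `|u k| <= exp_coeff x k) ->
  cvgn (series u).
Proof.
move=> x0 h; apply: normed_cvg.
apply: (@series_le_cvg _ _ (exp_coeff x)) => [k|k|k|] /=.
- exact: normr_ge0.
- exact: exp_coeff_ge0.
- exact: h.
- exact: is_cvg_series_exp_coeff.
Qed.

Lemma inv_nat_C (k : nat) : (k%:R : C)^-1 = ((k%:R : R)^-1)%:C%C.
Proof. by rewrite fmorphV rmorph_nat. Qed.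

Lemma expm_conv n (M : 'M[C]_n) i j :
  zconv (fun N => expm_partial M N i j) (expm M i j).
Proof.
pose P k := iter k (mulmx M) 1%:M.
have E : forall N, expm_partial M N i j =
   \sum_(k < N) ((k`!%:R : R)^-1)%:C%C * P k i j.
  move=> N; rewrite /expm_partial summxE; apply: eq_bigr => k _.
  by rewrite mxE inv_nat_C.
have x0 : 0 <= 2 * n%:R * mxbnd M by rewrite !mulr_ge0 // mxbnd_ge0.
have bnd : forall (g : C -> R), (forall k, `|g (P k i j)| <= (2 * n%:R * mxbnd M) ^+ k) ->
   cvgn (series (fun k => (k`!%:R : R)^-1 * g (P k i j))).
  move=> g hg; apply: (cvg_dom x0) => k.
  rewrite normrM [`|_^-1|]ger0_norm ?invr_ge0 // mulrC /exp_coeff /=.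
  by apply: ler_wpM2r; [rewrite invr_ge0 | apply: hg].
split.
  have e : (fun N => complex.Re (expm_partial M N i j)) =
           series (fun k => (k`!%:R : R)^-1 * complex.Re (P k i j)).
    apply: funext => N; rewrite E Re_sum /series /= big_mkord.
    by apply: eq_bigr => k _; rewrite ReM /= mul0r subr0.
  rewrite mxE /= e; apply: bnd => k; exact: (pow_bnd M k i j).1.
have e : (fun N => complex.Im (expm_partial M N i j)) =
         series (fun k => (k`!%:R : R)^-1 * complex.Im (P k i j)).
  apply: funext => N; rewrite E Im_sum /series /= big_mkord.
  by apply: eq_bigr => k _; rewrite ImM /= mul0r addr0.
rewrite mxE /= e; apply: bnd => k; exact: (pow_bnd M k i j).2.
Qed.

Lemma zconv_mulmxr a b c (F : nat -> 'M[C]_(a, b)) (L : 'M[C]_(a, b)) (P : 'M[C]_(b, c)) :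
  (forall i j, zconv (fun N => F N i j) (L i j)) ->
  forall i j, zconv (fun N => (F N *m P) i j) ((L *m P) i j).
Proof.
move=> h i j; rewrite mxE.
have := @zconv_sum _ (index_enum 'I_b) (fun k N => F N i k * P k j) (fun k => L i k * P k j)
   (fun k => @zconvMr _ _ (P k j) (h i k)).
by apply: zconv_ext => N; rewrite mxE.
Qed.

Lemma zconv_mulmxl a b c (F : nat -> 'M[C]_(b, c)) (L : 'M[C]_(b, c)) (P : 'M[C]_(a, b)) :
  (forall i j, zconv (fun N => F N i j) (L i j)) ->
  forall i j, zconv (fun N => (P *m F N) i j) ((P *m L) i j).
Proof.
move=> h i j; rewrite mxE.
have := @zconv_sum _ (index_enum 'I_b) (fun k N => P i k * F N k j) (fun k => P i k * L k j)
   (fun k => @zconvMl _ _ (P i k) (h k j)).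
by apply: zconv_ext => N; rewrite mxE.
Qed.

Lemma iter_comm a b (X : 'M[C]_a) (Y : 'M[C]_b) (P : 'M[C]_(a, b)) k :
  X *m P = P *m Y -> iter k (mulmx X) 1%:M *m P = P *m iter k (mulmx Y) 1%:M.
Proof.
move=> h; elim: k => [|k IH] /=; first by rewrite mul1mx mulmx1.
by rewrite -mulmxA IH mulmxA h -mulmxA.
Qed.

Lemma expm_partial_comm a b (X : 'M[C]_a) (Y : 'M[C]_b) (P : 'M[C]_(a, b)) N :
  X *m P = P *m Y -> expm_partial X N *m P = P *m expm_partial Y N.
Proof.
move=> h; rewrite /expm_partial mulmx_suml mulmx_sumr; apply: eq_bigr => k _.
by rewrite -scalemxAl -scalemxAr; congr (_ *: _); apply: iter_comm.
Qed.

Lemma expm_comm a b (X : 'M[C]_a) (Y : 'M[C]_b) (P : 'M[C]_(a, b)) :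
  X *m P = P *m Y -> expm X *m P = P *m expm Y.
Proof.
move=> h; apply/matrixP => i j.
have h1 := zconv_mulmxr P (expm_conv X) i j.
have h2 := zconv_mulmxl P (expm_conv Y) i j.
apply: zconv_uniq h1 _; move: h2; apply: zconv_ext => N.
by rewrite (expm_partial_comm N h).
Qed.

Lemma iter_tr a (X : 'M[C]_a) k :
  (iter k (mulmx X) 1%:M)^T = iter k (mulmx X^T) 1%:M.
Proof.
elim: k => [|k IH] /=; first by rewrite trmx1.
by rewrite trmx_mul IH; apply: iter_comm.
Qed.

Lemma expm_tr a (X : 'M[C]_a) : (expm X)^T = expm X^T.
Proof.
apply/matrixP => i j; rewrite !mxE.
have e : forall N, expm_partial X^T N i j = expm_partial X N j i.
  move=> N; rewrite /expm_partial !summxE; apply: eq_bigr => k _.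
  by rewrite !mxE -iter_tr mxE.
have e1 : (fun N => complex.Re (expm_partial X^T N i j)) = (fun N => complex.Re (expm_partial X N j i)).
  by apply: funext => N; rewrite e.
have e2 : (fun N => complex.Im (expm_partial X^T N i j)) = (fun N => complex.Im (expm_partial X N j i)).
  by apply: funext => N; rewrite e.
by rewrite e1 e2.
Qed.

End Cplx.

Section KronVec.
Variable K : comNzRingType.

Definition pix (m n : nat) (u : 'I_m * 'I_n) : 'I_(m * n) :=
  cast_ord (mxvec_cast m n) (enum_rank u).

Lemma pixK m n : cancel (@pix m n) (@ix_pair m n).
Proof. by move=> u; rewrite /ix_pair /pix cast_ordK enum_rankK. Qed.
Lemma ixK m n : cancel (@ix_pair m n) (@pix m n).
Proof. by move=> k; rewrite /ix_pair /pix enum_valK cast_ordKV. Qed.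

Lemma sum_ix m n (F : 'I_m -> 'I_n -> K) :
  \sum_(k < m * n) F (ix_pair k).1 (ix_pair k).2 = \sum_(a < m) \sum_(b < n) F a b.
Proof.
rewrite pair_big /= (reindex (@pix m n)) /=.
  by apply: eq_bigr => u _; rewrite pixK.
by apply: onW_bij; exists (@ix_pair m n); [exact: pixK | exact: ixK].
Qed.

Lemma kron_vec a b c d (M : 'M[K]_(a, c)) (N : 'M[K]_(b, d)) (X : 'M[K]_(d, c)) :
  kron M N *m vec X = vec (N *m X *m M^T).
Proof.
apply/matrixP => k z; rewrite !mxE.
rewrite (eq_bigr (fun l => M (ix_pair k).1 (ix_pair l).1 * N (ix_pair k).2 (ix_pair l).2
      * X (ix_pair l).2 (ix_pair l).1)); last by move=> l _; rewrite !mxE.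
rewrite (sum_ix (fun u v => M (ix_pair k).1 u * N (ix_pair k).2 v * X v u)).
apply: eq_bigr => u _; rewrite !mxE mulr_suml; apply: eq_bigr => v _.
by rewrite ?mxE; ring.
Qed.

Lemma kron_mul a b c d e f (A : 'M[K]_(a, c)) (B : 'M[K]_(b, d))
   (C : 'M[K]_(c, e)) (D : 'M[K]_(d, f)) :
  kron A B *m kron C D = kron (A *m C) (B *m D).
Proof.
apply/matrixP => k l; rewrite !mxE.
rewrite (eq_bigr (fun q => A (ix_pair k).1 (ix_pair q).1 * B (ix_pair k).2 (ix_pair q).2
      * (C (ix_pair q).1 (ix_pair l).1 * D (ix_pair q).2 (ix_pair l).2))); last by move=> q _; rewrite !mxE.
rewrite (sum_ix (fun u v => A (ix_pair k).1 u * B (ix_pair k).2 v * (C u (ix_pair l).1 * D v (ix_pair l).2))).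
rewrite ?mxE big_distrl /=; apply: eq_bigr => u _; rewrite big_distrr /=.
by apply: eq_bigr => v _; ring.
Qed.

Lemma trmx_kron a b c d (A : 'M[K]_(a, c)) (B : 'M[K]_(b, d)) :
  (kron A B)^T = kron A^T B^T.
Proof. by apply/matrixP => k l; rewrite !mxE. Qed.

Lemma kronBl a b c d (A A' : 'M[K]_(a, c)) (B : 'M[K]_(b, d)) :
  kron (A - A') B = kron A B - kron A' B.
Proof. by apply/matrixP => k l; rewrite !mxE mulrBl. Qed.
Lemma kronBr a b c d (A : 'M[K]_(a, c)) (B B' : 'M[K]_(b, d)) :
  kron A (B - B') = kron A B - kron A B'.
Proof. by apply/matrixP => k l; rewrite !mxE mulrBr. Qed.
Lemma kronDl a b c d (A A' : 'M[K]_(a, c)) (B : 'M[K]_(b, d)) :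
  kron (A + A') B = kron A B + kron A' B.
Proof. by apply/matrixP => k l; rewrite !mxE mulrDl. Qed.
Lemma kronDr a b c d (A : 'M[K]_(a, c)) (B B' : 'M[K]_(b, d)) :
  kron A (B + B') = kron A B + kron A B'.
Proof. by apply/matrixP => k l; rewrite !mxE mulrDr. Qed.
Lemma kronZl a b c d (s : K) (A : 'M[K]_(a, c)) (B : 'M[K]_(b, d)) :
  kron (s *: A) B = s *: kron A B.
Proof. by apply/matrixP => k l; rewrite !mxE mulrA. Qed.
Lemma kronZr a b c d (s : K) (A : 'M[K]_(a, c)) (B : 'M[K]_(b, d)) :
  kron A (s *: B) = s *: kron A B.
Proof. by apply/matrixP => k l; rewrite !mxE mulrCA. Qed.

Lemma vecD a b (X Y : 'M[K]_(a, b)) : vec (X + Y) = vec X + vec Y.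
Proof. by apply/matrixP => k l; rewrite !mxE. Qed.
Lemma vecB a b (X Y : 'M[K]_(a, b)) : vec (X - Y) = vec X - vec Y.
Proof. by apply/matrixP => k l; rewrite !mxE. Qed.

Lemma kron1_vec a b d (N : 'M[K]_(b, d)) (X : 'M[K]_(d, a)) :
  kron 1%:M N *m vec X = vec (N *m X).
Proof. by rewrite kron_vec trmx1 mulmx1. Qed.
Lemma kron_1vec a b c (M : 'M[K]_(a, c)) (X : 'M[K]_(b, c)) :
  kron M 1%:M *m vec X = vec (X *m M^T).
Proof. by rewrite kron_vec mul1mx. Qed.
Lemma kron_vecI a b c (M : 'M[K]_(a, c)) (N : 'M[K]_(b, c)) :
  kron M N *m vec 1%:M = vec (N *m M^T).
Proof. by rewrite kron_vec mulmx1. Qed.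

Lemma vec_kron a b c d (M : 'M[K]_(a, c)) (N : 'M[K]_(b, d)) (X : 'M[K]_(b, a)) :
  (vec X)^T *m kron M N = (vec (N^T *m X *m M))^T.
Proof. by rewrite -[LHS]trmxK trmx_mul trmxK trmx_kron kron_vec trmxK. Qed.

End KronVec.
End Helpers.
Unset Implicit Arguments.
Import Helpers.

Import Order.TTheory GRing.Theory Num.Theory.
Local Open Scope ring_scope.
Lemma trZ (K : comNzRingType) a b (s : K) (M : 'M[K]_(a, b)) : (s *: M)^T = s *: M^T.
Proof. by apply/matrixP => i j; rewrite !mxE. Qed.
Lemma trB (K : comNzRingType) a b (M N : 'M[K]_(a, b)) : (M - N)^T = M^T - N^T.
Proof. by apply/matrixP => i j; rewrite !mxE. Qed.
Lemma trN (K : comNzRingType) a b (M : 'M[K]_(a, b)) : (- M)^T = - M^T.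
Proof. by apply/matrixP => i j; rewrite !mxE. Qed.
Lemma negeq (V : zmodType) (a b c d : V) : - a - b = c - d -> b + a = d - c.
Proof. by move=> h; rewrite -[b + a]opprK opprD addrC h opprB. Qed.
Lemma zm1 (V : zmodType) (a b c : V) : a - b - (a - c) = c - b.
Proof. by rewrite opprB addrC addrA subrK addrC. Qed.

Lemma zm2 (V : zmodType) (a b c : V) : a - c = b + (a - b - c).
Proof. by rewrite addrA [b + _]addrC subrK. Qed.
Lemma zm3 (V : zmodType) (a t c s : V) : (a - t) - (c - s) = (a - c) - (t - s).
Proof. by rewrite !opprB addrACA [RHS]addrACA [- t - c]addrC. Qed.
Lemma zm4 (V : zmodType) (a b c : V) : a - b - c = (a - c) - b.
Proof. by rewrite addrAC. Qed.
Lemma zm5 (V : zmodType) (a b : V) : a - (a - b) = b.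
Proof. by rewrite opprB addrC subrK. Qed.
Lemma zm6 (V : zmodType) (x u w : V) : (x - w) - (u - w) = x - u.
Proof. by rewrite opprB addrA subrK. Qed.
Lemma trDD (K : comNzRingType) a b (M N : 'M[K]_(a, b)) : (M + N)^T = M^T + N^T.
Proof. by apply/matrixP => i j; rewrite !mxE. Qed.

Theorem theorem3p3 (R : realType) (n m p r : nat)
  (A : 'M[R]_n) (B : 'M[R]_(n, m)) (C : 'M[R]_(p, n)) (T : R)
  (Ah : 'M[R[i]]_r) (Bh : 'M[R[i]]_(r, m)) (Ch : 'M[R[i]]_(p, r))
  (lam : 'rV[R[i]]_r) (S : 'M[R[i]]_r)
  (Bt : 'M[R[i]]_(r, m)) (Ct : 'M[R[i]]_(p, r))
  (V W : 'M[R[i]]_(n, r)) :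
  let Tc : R[i] := (T%:C)%C in
  let Ac := cmx A in let Bc := cmx B in let Cc := cmx C in
  let D := diag_mx lam in
  let WVi := invmx (W^T *m V) in
  let Pr := V *m WVi *m W^T in
  let K2h := kron (idm R r) D + kron Ah (idm R r) in
  let K2 := kron (idm R n) D + kron Ac (idm R r) in
  0 < T ->
  S \in unitmx ->
  Ah = invmx S *m D *m S ->
  Bt = S *m Bh ->
  Ct = Ch *m invmx S ->
  W^T *m V \in unitmx ->
  - (V *m D) - Ac *m V
    = Bc *m Bt^T - expm (Tc *: Ac) *m Bc *m Bt^T *m expm (Tc *: D) ->
  - (W *m D) - Ac^T *m W
    = Cc^T *m Ct - expm (Tc *: Ac^T) *m Cc^T *m Ct *m expm (Tc *: D) ->
  Ah = WVi *m W^T *m Ac *m V ->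
  Bh = WVi *m W^T *m Bc ->
  Ch = Cc *m V ->
  (* all matrix inverses appearing below exist *)
  kron (idm R r) Ah + kron D (idm R r) \in unitmx ->
  kron (idm R r) Ac + kron D (idm R n) \in unitmx ->
  kron (idm R r) D + kron Ah^T (idm R r) \in unitmx ->
  kron (idm R n) D + kron Ac^T (idm R r) \in unitmx ->
  K2h \in unitmx ->
  K2 \in unitmx ->
  (* (a) *)
  (let Lc := kron (idm R r) Ch
             *m invmx (kron (idm R r) Ah + kron D (idm R r))
             *m (kron (expm (Tc *: D) *m Bt) (expm (Tc *: Ah) *m Bh)
                 - kron Bt Bh) *m vecI R m in
   let Rc := kron (idm R r) Cc
             *m invmx (kron (idm R r) Ac + kron D (idm R n))
             *m (kron (expm (Tc *: D) *m Bt) (expm (Tc *: Ac) *m Bc)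
                 - kron Bt Bc) *m vecI R m in
   let Ec := kron (idm R r) Ch
             *m invmx (kron (idm R r) Ah + kron D (idm R r))
             *m kron (expm (Tc *: D) *m Bt)
                     (WVi *m W^T *m (expm (Tc *: (Ac *m Pr)) - expm (Tc *: Ac))
                          *m Bc)
             *m vecI R m in
   Lc - Rc = Ec)
  /\
  (* (b) *)
  (let Lb := kron Bh^T (idm R r)
             *m invmx (kron (idm R r) D + kron Ah^T (idm R r))
             *m (kron (expm (Tc *: Ah^T) *m Ch^T) (expm (Tc *: D) *m Ct^T)
                 - kron Ch^T Ct^T) *m vecI R p in
   let Rb := kron Bc^T (idm R r)
             *m invmx (kron (idm R n) D + kron Ac^T (idm R r))
             *m (kron (expm (Tc *: Ac^T) *m Cc^T) (expm (Tc *: D) *m Ct^T)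
                 - kron Cc^T Ct^T) *m vecI R p in
   let Eb := kron Bh^T (idm R r)
             *m invmx (kron (idm R r) D + kron Ah^T (idm R r))
             *m kron (V^T *m (expm (Tc *: (Ac^T *m Pr^T)) - expm (Tc *: Ac^T))
                          *m Cc^T)
                     (expm (Tc *: D) *m Ct^T)
             *m vecI R p in
   Lb - Rb = Eb)
  /\
  (* (c) *)
  (forall k : 'I_r,
   let Ll := (vecI R p)^T *m kron Ch Ct *m invmx K2h
             *m kron (idm R r) (eeT R k)
             *m (invmx K2h *m (kron (expm (Tc *: Ah) *m Bh) (expm (Tc *: D) *m Bt)
                              - kron Bh Bt)
                 - kron (Tc *: (expm (Tc *: Ah) *m Bh)) (expm (Tc *: D) *m Bt))
             *m vecI R m in
   let Rl := (vecI R p)^T *m kron Cc Ct *m invmx K2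
             *m kron (idm R n) (eeT R k)
             *m (invmx K2 *m (kron (expm (Tc *: Ac) *m Bc) (expm (Tc *: D) *m Bt)
                             - kron Bc Bt)
                 - kron (Tc *: (expm (Tc *: Ac) *m Bc)) (expm (Tc *: D) *m Bt))
             *m vecI R m in
   let El1 := (vecI R p)^T *m kron Ch Ct *m invmx K2h
             *m kron (idm R r) (eeT R k)
             *m (invmx K2h *m kron (WVi *m W^T *m
                                     (expm (Tc *: (Ac *m Pr)) - expm (Tc *: Ac)) *m Bc)
                                   (expm (Tc *: D) *m Bt)
                 - kron (Tc *: (WVi *m W^T *m
                                 (expm (Tc *: (Ac *m Pr)) - expm (Tc *: Ac)) *m Bc))
                        (expm (Tc *: D) *m Bt))
             *m vecI R m in
   let El2 := (vecI R p)^T *m kron (Cc *m expm (Tc *: Ac)) (Ct *m expm (Tc *: D))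
             *m (kron V (idm R r) *m invmx K2h *m kron (WVi *m W^T) (idm R r)
                 - invmx K2)
             *m kron (idm R n) (eeT R k)
             *m (invmx K2 *m (kron (expm (Tc *: Ac) *m Bc) (expm (Tc *: D) *m Bt)
                             - kron Bc Bt)
                 - kron (Tc *: (expm (Tc *: Ac) *m Bc)) (expm (Tc *: D) *m Bt))
             *m vecI R m in
   Ll - Rl = El1 + El2).
Proof.
move=> Tc Ac Bc Cc D WVi Pr K2h K2 T0 Su AhS BtS CtS WVu HV HW HAh HBh HCh U1 U2 U3 U4 U5 U6.
have trD : D^T = D by rewrite tr_diag_mx.
clearbody Tc Ac Bc Cc D.
set E := expm (Tc *: D) in HV HW *.
have ET : E^T = E by rewrite /E expm_tr trZ trD; reflexivity.
set P := WVi *m W^T in HV HW *.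
have PV : P *m V = 1%:M by rewrite /P -mulmxA mulVmx.
have WVP : W^T *m V *m P = W^T by rewrite /P mulmxA mulmxV // mul1mx.
have HPr : Pr = V *m P by rewrite /Pr /P mulmxA.
have HAh' : Ah = P *m Ac *m V by rewrite HAh.
have HBh' : Bh = P *m Bc by rewrite HBh.
clearbody WVi P Pr.
set EA := expm (Tc *: Ac) in HV HW *.
set EAP := expm (Tc *: (Ac *m Pr)) in HV HW *.
set EAh := expm (Tc *: Ah) in HV HW *.
set EPA := expm (Tc *: (Pr *m Ac)) in HV HW *.
have EAT : expm (Tc *: Ac^T) = EA^T by rewrite /EA expm_tr trZ; reflexivity.
have EAhT : expm (Tc *: Ah^T) = EAh^T by rewrite /EAh expm_tr trZ; reflexivity.
have EPAT : expm (Tc *: (Ac^T *m Pr^T)) = EPA^T by rewrite /EPA expm_tr trZ trmx_mul; reflexivity.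
have EAhP : EAh *m P = P *m EAP.
  apply: expm_comm; rewrite HAh' HPr -scalemxAl -scalemxAr !mulmxA; reflexivity.
have EPAV : EPA *m V = V *m EAh.
  apply: expm_comm; rewrite HAh' HPr -scalemxAl -scalemxAr !mulmxA; reflexivity.
rewrite EAT EAhT EPAT in HW *.
clearbody E EA EAP EAh EPA.
have HV' : Ac *m V + V *m D = EA *m Bc *m Bt^T *m E - Bc *m Bt^T.
  exact: negeq HV.
have HW' : W^T *m Ac + D *m W^T = E *m Ct^T *m Cc *m EA - Ct^T *m Cc.
  apply: negeq; have := congr1 trmx HW.
  rewrite !trB trN !trmx_mul !trmxK trD ET.
  by rewrite -!mulmxA.
split; [|split].
- move=> Lc Rc Ec.
  have K1V : (kron (idm R r) Ac + kron D (idm R n)) *m vec V = vec (Ac *m V + V *m D).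
    by rewrite /idm mulmxDl kron1_vec kron_1vec trD vecD.
  have K1h1 : (kron (idm R r) Ah + kron D (idm R r)) *m vec (1%:M : 'M[R[i]]_r) = vec (Ah + D).
    by rewrite /idm mulmxDl kron1_vec kron_1vec trD mulmx1 mul1mx vecD.
  have A2 : Rc = vec Ch.
    rewrite /Rc /vecI -!mulmxA mulmxBl !kron_vecI -vecB !trmx_mul ET [EA *m Bc *m _]mulmxA -HV' -K1V mulKmx //.
    by rewrite /idm kron1_vec HCh.
  have A1 : Lc - Ec = vec Ch.
    rewrite /Lc /Ec /vecI -!mulmxA -!mulmxBr mulmxBl !kron_vecI -!vecB !trmx_mul ET.
    have key : EAh *m Bh *m (Bt^T *m E) - Bh *m Bt^T - P *m ((EAP - EA) *m Bc) *m (Bt^T *m E) = Ah + D.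
      rewrite HBh' [EAh *m (P *m Bc)]mulmxA EAhP mulmxBl mulmxBr mulmxBl -!mulmxA zm1 -mulmxBr.
      have -> : EA *m (Bc *m (Bt^T *m E)) - Bc *m (Bt^T) = Ac *m V + V *m D by rewrite HV' !mulmxA.
      by rewrite mulmxDr [P *m (V *m D)]mulmxA PV mul1mx HAh' mulmxA.
    rewrite [vec _](_ : _ = (kron (idm R r) Ah + kron D (idm R r)) *m vec (1%:M : 'M[R[i]]_r)); last first.
      by rewrite K1h1; congr vec; exact: key.
    by rewrite mulKmx // /idm kron1_vec mulmx1.
  by rewrite A2 -A1 opprB addrC subrK.
- move=> Lb Rb Eb.
  have K3W : (kron (idm R n) D + kron Ac^T (idm R r)) *m vec W^T = vec (W^T *m Ac + D *m W^T).
    by rewrite /idm mulmxDl kron1_vec kron_1vec trmxK vecD addrC.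
  have K3hW : (kron (idm R r) D + kron Ah^T (idm R r)) *m vec (W^T *m V)
      = vec (D *m (W^T *m V) + W^T *m V *m Ah).
    by rewrite /idm mulmxDl kron1_vec kron_1vec trmxK vecD.
  have B2 : Rb = vec (W^T *m Bc).
    rewrite /Rb /vecI -!mulmxA mulmxBl !kron_vecI -vecB !trmx_mul !trmxK.
    rewrite [E *m Ct^T *m _]mulmxA -HW' -K3W mulKmx //.
    by rewrite /idm kron_1vec trmxK.
  have B1 : Lb - Eb = vec (W^T *m Bc).
    rewrite /Lb /Eb /vecI -!mulmxA -!mulmxBr mulmxBl !kron_vecI -!vecB !trmx_mul !trmxK trB !trmxK.
    have key : E *m Ct^T *m (Ch *m EAh) - Ct^T *m Ch - E *m Ct^T *m (Cc *m (EPA - EA) *m V)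
        = D *m (W^T *m V) + W^T *m V *m Ah.
      rewrite HCh -(mulmxA Cc V EAh) -EPAV mulmxBr mulmxBl mulmxBr -!mulmxA zm1.
      have -> : E *m (Ct^T *m (Cc *m (EA *m V))) - Ct^T *m (Cc *m V) = (W^T *m Ac + D *m W^T) *m V.
        by rewrite HW' mulmxBl -!mulmxA.
      by rewrite mulmxDl HAh' !mulmxA WVP addrC.
    rewrite [vec _](_ : _ = (kron (idm R r) D + kron Ah^T (idm R r)) *m vec (W^T *m V)); last first.
      by rewrite K3hW; congr vec; exact: key.
    by rewrite mulKmx // /idm kron_1vec trmxK HBh' mulmxA WVP.
  by rewrite B2 -B1 opprB addrC subrK.
- move=> k Ll Rl El1 El2; rewrite /Ll /Rl /El1 /El2 {Ll Rl El1 El2}.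
  set vI := vecI R m. set v := (vecI R p)^T. set iK2h := invmx K2h. set iK2 := invmx K2.
  set kEr := kron (idm R r) (eeT R k). set kEn := kron (idm R n) (eeT R k).
  set kV := kron V (idm R r). set kP := kron P (idm R r).
  set Q := E *m Bt.
  set Y1 := kron (EA *m Bc) Q - kron Bc Bt. set Y2 := kron (Tc *: (EA *m Bc)) Q.
  have F0 : kron Ch Ct = kron Cc Ct *m kV by rewrite /kV kron_mul /idm mulmx1 HCh.
  have ea : v *m kron Cc Ct = (vec (Ct^T *m Cc))^T by rewrite /v /vecI vec_kron mulmx1.
  have eb : v *m kron (Cc *m EA) (Ct *m E) = (vec (E *m Ct^T *m Cc *m EA))^T.
    by rewrite /v /vecI vec_kron mulmx1 trmx_mul ET !mulmxA.
  set w := (vec W^T)^T. set z := (vec (W^T *m V))^T.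
  have F1 : w *m K2 = (vec (E *m Ct^T *m Cc *m EA))^T - (vec (Ct^T *m Cc))^T.
    rewrite /w /K2 mulmxDr !vec_kron /idm trD !trmx1 mulmx1 mul1mx -trDD -vecD [D *m W^T + _]addrC.
    by rewrite HW' vecB trB.
  set a := v *m kron Cc Ct. set b := v *m kron (Cc *m EA) (Ct *m E).
  have F1' : a *m iK2 = b *m iK2 - w.
    have e : w = (w *m K2) *m iK2 by rewrite /iK2 mulmxK.
    rewrite F1 -ea -eb mulmxBl in e.
    by rewrite e opprB addrC subrK.
  have eqb : D *m (W^T *m V) + W^T *m V *m Ah = (W^T *m Ac + D *m W^T) *m V.
    by rewrite mulmxDl HAh' !mulmxA WVP addrC.
  have F2 : z *m K2h = (b - a) *m kV.
    rewrite /z /K2h mulmxDr !vec_kron /idm trD !trmx1 mulmx1 mul1mx -trDD -vecD.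
    rewrite /b /a ea eb mulmxBl /kV !vec_kron /idm !trmx1 !mul1mx -trB -vecB -mulmxBl -HW'.
    by congr (vec _)^T; exact: eqb.
  have F2' : a *m kV *m iK2h = b *m kV *m iK2h - z.
    have e : z = (z *m K2h) *m iK2h by rewrite /iK2h mulmxK.
    rewrite F2 mulmxBl mulmxBl in e.
    by rewrite e opprB addrC subrK.
  have HVt : V^T *m Ac^T + D *m V^T = E *m Bt *m Bc^T *m EA^T - Bt *m Bc^T.
    have := congr1 trmx HV'; rewrite trDD trB !trmx_mul !trmxK trD ET => ->.
    by rewrite !mulmxA.
  have Y1v : Y1 *m vI = K2 *m vec V^T.
    rewrite /Y1 /vI /vecI /Q mulmxBl !kron_vecI /K2 mulmxDl /idm kron1_vec kron_1vec -vecD -vecB.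
    congr vec; rewrite [D *m V^T + _]addrC HVt trmx_mul !mulmxA; reflexivity.
  have K2hVP : K2h *m vec (V^T *m P^T) = kP *m (K2 *m vec V^T).
    rewrite /K2h /K2 /kP !mulmxDl /idm !kron1_vec !kron_1vec mulmxDr !kron_1vec.
    congr (_ + _); congr vec; first by rewrite mulmxA.
    by rewrite -trmx_mul PV trmx1 mul1mx HAh' !trmx_mul !mulmxA.
  have F3 : iK2h *m (kP *m (Y1 *m vI)) = kP *m (iK2 *m (Y1 *m vI)).
    rewrite Y1v -K2hVP /iK2h /iK2 !mulKmx //.
    by rewrite /kP /idm kron_1vec.
  have F4 : z *m kP = w by rewrite /z /kP /w vec_kron /idm trmx1 mul1mx WVP.
  have F5 : kP *m kEn = kEr *m kP by rewrite /kP /kEn /kEr /idm !kron_mul !mulmx1 !mul1mx.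
  have hG : EAh *m Bh - P *m (EAP - EA) *m Bc = P *m (EA *m Bc).
    by rewrite HBh' [EAh *m (P *m Bc)]mulmxA EAhP mulmxBr mulmxBl -!mulmxA zm5.
  have e1 : kP *m Y1 = kron (P *m (EA *m Bc)) Q - kron Bh Bt.
    by rewrite /kP /Y1 mulmxBr !kron_mul /idm !mul1mx HBh'.
  have e2 : kP *m Y2 = kron (Tc *: (P *m (EA *m Bc))) Q.
    by rewrite /kP /Y2 kron_mul /idm mul1mx -scalemxAr.
  set M := v *m kron Ch Ct *m iK2h *m kEr.
  apply/eqP; rewrite [X in _ == X]addrC -subr_eq addrAC; apply/eqP.
  rewrite -mulmxBl -mulmxBr zm3 -mulmxBr zm4 -kronBl hG -kronBl -scalerBr hG -e1 -e2.
  rewrite -mulmxA mulmxBl -[iK2h *m (kP *m Y1) *m vI]mulmxA -[kP *m Y1 *m vI]mulmxA F3.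
  rewrite -[kP *m Y2 *m vI]mulmxA -mulmxBr [iK2 *m (Y1 *m vI)]mulmxA -mulmxBl.
  rewrite /M F0 [v *m (kron Cc Ct *m kV)]mulmxA -/a.
  have G1 : forall X, a *m (iK2 *m X) = b *m (iK2 *m X) - w *m X.
    by move=> ? X; rewrite !mulmxA F1' mulmxBl.
  have G2 : forall X, a *m (kV *m (iK2h *m X)) = b *m (kV *m (iK2h *m X)) - z *m X.
    by move=> ? X; rewrite !mulmxA F2' mulmxBl.
  have G4 : forall X, z *m (kP *m X) = w *m X.
    by move=> ? X; rewrite mulmxA F4.
  clearbody a b M w z.
  rewrite -!mulmxA.
  set Zc := (iK2 *m Y1 - Y2) *m vI.
  clearbody Zc vI v iK2h iK2 kEr kEn kV kP Q Y1 Y2.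
  have F5' : kEr *m (kP *m Zc) = kP *m (kEn *m Zc) by rewrite mulmxA -F5 -mulmxA.
  rewrite F5' G2 G4 G1 zm6 mulmxBl mulmxBr -!mulmxA.
  reflexivity.
Qed.
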